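(* For every non-negative integer $m$ and positive integer $n$, $$\sum_{k=1}^n\frac{H_{n-k}(m)}{k(k+1)}=H_n(m)+H_n(m+1)-H_{n+1}(m+1).$$ In particular, $\sum_{k=1}^n\frac{H_{n-k}}{k(k+1)}=H_n+H_n^2-H_n^{(2)}-H_{n+1}^2+H_{n+1}^{(2)}$.
   Context: For integers $m\ge 1$, $n\ge 0$, the multiple harmonic-like numbers are $H_n(m)=\sum_{1\le k_1+k_2+\cdots+k_m\le n}\frac{1}{k_1k_2\cdots k_m}$ (sum over positive integers $k_1,\dots,k_m$), with $H_n(0)=1$ for $n\ge 0$ and $H_0(m)=0$ for $m\ge1$. $H_n=H_n(1)=\sum_{k=1}^n\frac1k$, $H_n^{(2)}=\sum_{k=1}^n\frac1{k^2}$. *)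

(* Defs.v *)
From mathcomp Require Import all_boot all_order all_algebra.
Set Implicit Arguments. Unset Strict Implicit. Unset Printing Implicit Defensive.
Import Order.TTheory GRing.Theory Num.Theory.
Local Open Scope ring_scope.

(* Each k_i <= n, so tuples are finite functions
   'I_m -> 'I_n.+1.  Convention: H_n(0) = 1 (for m >= 1, n = 0 the sum is
   empty, hence H_0(m) = 0 automatically). *)
Definition Hm (n m : nat) : rat :=
  if m == 0%N then 1 else
  \sum_(k : {ffun 'I_m -> 'I_n.+1} |
          [forall i, (0 < k i)%N] && (\sum_i (k i : nat) <= n)%N)
     \prod_i ((k i : nat)%:R)^-1.

Definition harm (n : nat) : rat := \sum_(1 <= k < n.+1) (k%:R)^-1.
Definition harm2 (n : nat) : rat := \sum_(1 <= k < n.+1) ((k%:R) ^+ 2)^-1.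

(* Main.v *)
Require Import Defs.
From mathcomp Require Import all_boot all_order all_algebra.
From mathcomp Require Import zify.
Import Order.TTheory GRing.Theory Num.Theory.
Local Open Scope ring_scope.

Definition T (N n m : nat) : rat :=
  \sum_(f : {ffun 'I_m -> 'I_N} |
          [forall i, (0 < f i)%N] && (\sum_i (f i : nat) <= n)%N)
     \prod_i ((f i : nat)%:R)^-1.

Definition hcons N m (p : 'I_N * {ffun 'I_m -> 'I_N}) : {ffun 'I_m.+1 -> 'I_N} :=
  [ffun i => if unlift ord0 i is Some j then p.2 j else p.1].

Lemma hcons0 N m p : @hcons N m p ord0 = p.1.
Proof. by rewrite /hcons ffunE unlift_none. Qed.
Lemma hconsS N m p j : @hcons N m p (lift ord0 j) = p.2 j.
Proof. by rewrite /hcons ffunE liftK. Qed.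

Lemma T_rec N n m : T N n m.+1 =
  \sum_(a < N | (0 < a <= n)%N) (a%:R)^-1 * T N (n - a) m.
Proof.
rewrite /T (reindex (@hcons N m)); last first.
  exists (fun f : {ffun 'I_m.+1 -> 'I_N} => (f ord0, [ffun j : 'I_m => f (lift ord0 j)])) => [[a g] _|f _].
    by rewrite hcons0; congr pair; apply/ffunP => j; rewrite ffunE hconsS.
  apply/ffunP => i; rewrite /hcons ffunE.
  by case: unliftP => [j ->|->] //=; rewrite ffunE.
rewrite (eq_bigr (fun p : 'I_N * {ffun 'I_m -> 'I_N} => ((p.1 : nat)%:R)^-1 * \prod_i ((p.2 i : nat)%:R)^-1)); last first.
  by move=> [a g] _; rewrite big_ord_recl hcons0; congr (_ * _);
     apply: eq_bigr => j _; rewrite hconsS.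
rewrite (eq_bigl (fun p : 'I_N * {ffun 'I_m -> 'I_N} => (0 < p.1 <= n)%N &&
   ([forall i, (0 < p.2 i)%N] && (\sum_i (p.2 i : nat) <= n - p.1)%N))); last first.
  move=> [a g] /=; rewrite big_ord_recl hcons0.
  rewrite (eq_bigr (fun j => (g j : nat))); last by move=> j _; rewrite hconsS.
  have -> : [forall i, (0 < @hcons N m (a, g) i)%N] = (0 < a)%N && [forall j, (0 < g j)%N].
    apply/forallP/andP => [H|[Ha /forallP H] i].
      split; first by have := H ord0; rewrite hcons0.
      by apply/forallP => j; have := H (lift ord0 j); rewrite hconsS.
    by case: (unliftP ord0 i) => [j ->|->]; rewrite ?hconsS ?hcons0.
  case: (0 < a)%N; case: [forall j, (0 < g j)%N] => //=;
  apply/idP/idP; lia.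
rewrite -(pair_big_dep (fun a : 'I_N => (0 < a <= n)%N)
   (fun (a : 'I_N) (g : {ffun 'I_m -> 'I_N}) => [forall i, (0 < g i)%N] && (\sum_i (g i : nat) <= n - a)%N)
   (fun (a : 'I_N) (g : {ffun 'I_m -> 'I_N}) => ((a : nat)%:R)^-1 * \prod_i ((g i : nat)%:R)^-1)) /=.
by apply: eq_bigr => a _; rewrite mulr_sumr.
Qed.

Lemma T0 N n : T N n 0 = 1.
Proof.
rewrite /T (big_pred1 (ffun0 (card_ord 0) : {ffun 'I_0 -> 'I_N})).
  by rewrite big_ord0.
move=> f /=; apply/andP/eqP => [_|_]; first by apply/ffunP => -[].
by split; [apply/forallP => -[]|rewrite big_ord0].
Qed.

Fixpoint G (m n : nat) : rat :=
  if m is m'.+1 then \sum_(1 <= k < n.+1) (k%:R)^-1 * G m' (n - k) else 1.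

Lemma T_G m : forall N n, (n < N)%N -> T N n m = G m n.
Proof.
elim: m => [|m IH] N n nN; first by rewrite T0.
rewrite T_rec /= -(big_mkord (fun a => 0 < a <= n)%N (fun a => (a%:R)^-1 * T N (n - a) m)).
rewrite (big_cat_nat _ (n := n.+1)) //= [X in _ + X]big1_seq ?addr0; last first.
  move=> i /andP[/andP[_ H] /[!mem_iota]/andP[H2 _]]; lia.
rewrite big_ltn_cond //=.
rewrite big_nat_cond [RHS]big_nat_cond; apply: eq_big => i.
  by rewrite andbT; lia.
move=> /andP[/andP[_ H] _]; rewrite IH //; lia.
Qed.

Lemma Hm_G n m : Hm n m = G m n.
Proof.
rewrite -(@T_G m n.+1 n (ltnSn n)) /Hm; case: m => [|m] //=; by rewrite T0.
Qed.
From mathcomp Require Import ring.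

Lemma part1 m n : \sum_(1 <= k < n.+1) G m (n - k) / ((k * k.+1)%N)%:R
  = G m n + G m.+1 n - G m.+1 n.+1.
Proof.
have -> : G m.+1 n.+1 = G m n + \sum_(1 <= k < n.+1) (k.+1%:R)^-1 * G m (n - k).
  by rewrite /= big_nat_recl // subn1 /= invr1 mul1r.
rewrite (eq_big_nat _ _ (F2 := fun k => (k%:R)^-1 * G m (n - k) - (k.+1%:R)^-1 * G m (n - k))); last first.
  move=> k /andP[k1 _]; rewrite natrM.
  have k0 : (k%:R : rat) != 0 by rewrite pnatr_eq0 -lt0n.
  have k10 : (k.+1%:R : rat) != 0 by rewrite pnatr_eq0.
  field; by rewrite addrC -mulrSr k10 k0.
by rewrite big_split /= sumrN; ring.
Qed.

Lemma G1 n : G 1 n = harm n.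
Proof. by rewrite /= /harm; apply: eq_bigr => k _; rewrite mulr1. Qed.

Lemma harmS n : harm n.+1 = harm n + (n.+1%:R)^-1.
Proof. by rewrite /harm big_nat_recr. Qed.
Lemma harm2S n : harm2 n.+1 = harm2 n + ((n.+1%:R)^+2)^-1.
Proof. by rewrite /harm2 big_nat_recr. Qed.

Lemma GS m n : G m.+1 n = \sum_(1 <= k < n.+1) (k%:R)^-1 * G m (n - k).
Proof. by []. Qed.

Lemma G2 n : G 2 n = harm n ^+ 2 - harm2 n.
Proof.
elim: n => [|n IH]; first by rewrite /= big_geq // /harm /harm2 !big_geq // expr0n subr0.
have E : G 2 n.+1 = G 2 n + \sum_(1 <= k < n.+1) (k%:R)^-1 * ((n.+1 - k)%:R)^-1.
  rewrite GS; set g := G 1; set h := G 2 n; rewrite big_nat_recr //= subnn /g /h G1.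
  have -> : harm 0 = 0 by rewrite /harm big_geq.
  rewrite mulr0 addr0.
  rewrite GS -big_split; apply: eq_big_nat => k /andP[k1 kn].
  rewrite !G1; rewrite -[RHS]/(k%:R^-1 * harm (n - k) + k%:R^-1 / (n.+1 - k)%:R) -mulrDr; congr (_ * _).
  have -> : (n.+1 - k = (n - k).+1)%N by lia.
  by rewrite harmS.
have S : \sum_(1 <= k < n.+1) (k%:R)^-1 * ((n.+1 - k)%:R)^-1
   = (n.+1%:R)^-1 * (harm n + \sum_(1 <= k < n.+1) ((n.+1 - k)%:R)^-1).
  rewrite /harm -big_split mulr_sumr; apply: eq_big_nat => k /andP[k1 kn].
  have k0 : (k%:R : rat) != 0 by rewrite pnatr_eq0 -lt0n.
  rewrite -[X in _ = _ * X]/(k%:R^-1 + (n.+1 - k)%:R^-1 : rat).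
  have nk0 : ((n.+1 - k)%:R : rat) != 0 by rewrite pnatr_eq0; lia.
  have -> : (n.+1%:R : rat) = k%:R + (n.+1 - k)%:R by rewrite -natrD; congr (_%:R); lia.
  move: k0 nk0; set x := (k%:R : rat); set y := ((n.+1 - k)%:R : rat) => k0 nk0.
  have xy : x + y != 0 by rewrite /x /y -natrD pnatr_eq0; lia.
  by field; rewrite xy k0 nk0.
have R : \sum_(1 <= k < n.+1) ((n.+1 - k)%:R : rat)^-1 = harm n.
  rewrite /harm big_nat_rev /=; apply: eq_big_nat => k /andP[k1 kn].
  by congr (_%:R^-1); lia.
have n0 : (n.+1%:R : rat) != 0 by rewrite pnatr_eq0.
rewrite E S R IH harmS harm2S -exprVn; ring.
Qed.

Theorem theorem8 :
  (forall (m n : nat), (0 < n)%N ->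
     \sum_(1 <= k < n.+1) Hm (n - k) m / ((k * k.+1)%N)%:R
     = Hm n m + Hm n m.+1 - Hm n.+1 m.+1)
  /\
  (forall n : nat, (0 < n)%N ->
     \sum_(1 <= k < n.+1) harm (n - k) / ((k * k.+1)%N)%:R
     = harm n + harm n ^+ 2 - harm2 n - harm n.+1 ^+ 2 + harm2 n.+1).
Proof.
split=> [m n _|n _].
  rewrite !Hm_G -part1; apply: eq_bigr => k _; by rewrite Hm_G.
rewrite (eq_bigr (fun k => G 1 (n - k) / ((k * k.+1)%N)%:R)); last by move=> k _; rewrite G1.
rewrite part1 G1 !G2; ring.
Qed.
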